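(* Let $\mathcal L$ be the Laplacian mechanism, let $c_1,\ldots,c_n>0$, and let the contract functions be $W_i(\varepsilon)=c_i\varepsilon$ for $i=1,\ldots,n$. Define micro-payments $\mu_i(\mathbf Q)=\frac{\gamma c_i}{\sqrt{v/2}}|q_i|$ for $\mathbf Q=(\mathbf q,v)$, $i=1,\ldots,n$. Then $(\boldsymbol\varepsilon,\boldsymbol\mu,\mathbf W)$ is semi-balanced: each $\mu_i$ is fair, micro arbitrage-free, and compensating for $W_i$ with respect to $\mathcal L$.
   Context: Fix a bounded set $X\subseteq\mathbb R$ and let $\gamma=\sup_{x\in X}|x|$. Databases are vectors $\mathbf x\in X^n$; $\mathbf x^{(i)}$ is $\mathbf x$ with the $i$-th coordinate replaced by $0$. Queries are pairs $\mathbf Q=(\mathbf q,v)$ with $\mathbf q\in\mathbb R^n$ and $v\in(0,\infty)$. The Laplacian mechanism answers $\mathbf Q$ by $\mathcal L_{\mathbf Q}(\mathbf x)=\mathbf q\cdot\mathbf x+\rho$, where $\rho$ has the Laplace density $\frac{1}{2b}e^{-|t|/b}$ with $b=\sqrt{v/2}$. The privacy loss of item $i$ is $\varepsilon_i(\mathcal L_{\mathbf Q})=\sup_{S,\mathbf x}\left|\log\frac{\Pr[\mathcal L_{\mathbf Q}(\mathbf x)\in S]}{\Pr[\mathcal L_{\mathbf Q}(\mathbf x^{(i)})\in S]}\right|$ over $\mathbf x\in X^n$ and measurable $S\subseteq\mathbb R$. The determinacy relation $\mathbf S\rightarrow\mathbf Q$ (finite multisets of queries to queries) is the smallest relation satisfying: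 (Summation) $\{(\mathbf q_1,v_1),\ldots,(\mathbf q_k,v_k)\}\rightarrow(\sum_j\mathbf q_j,\sum_jv_j)$; (Scalar multiplication) $\{(\mathbf q,v)\}\rightarrow(c\mathbf q,c^2v)$ for $c\in\mathbb R$; (Relaxation) $\{(\mathbf q,v)\}\rightarrow(\mathbf q,v')$ for $v\le v'$; (Transitivity) if $\mathbf S_j\rightarrow\mathbf Q_j$ for $j=1,\ldots,k$ and $\{\mathbf Q_1,\ldots,\mathbf Q_k\}\rightarrow\mathbf Q$ then $\mathbf S_1\uplus\cdots\uplus\mathbf S_k\rightarrow\mathbf Q$. A function $\mu$ from queries to $[0,\infty]$ is arbitrage-free if for every $m\ge 1$ and queries with $\{\mathbf Q_1,\ldots,\mathbf Q_m\}\rightarrow\mathbf Q$, $\mu(\mathbf Q)\le\sum_j\mu(\mathbf Q_j)$. A micro-payment $\mu_i$ is fair if $q_i=0$ implies $\mu_i(\mathbf q,v)=0$; micro arbitrage-free if $\mu_i$ is arbitrage-free; compensating for the contract $W_i$ (w.r.t. mechanism $\mathcal L$) if $\mu_i(\mathbf Q)\ge W_i(\varepsilon_i(\mathcal L_{\mathbf Q}))$ for every query $\mathbf Q$. *)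

(* Defs.v *)
From HB Require Import structures.
From mathcomp Require Import all_boot all_order all_algebra.
From mathcomp Require Import all_classical all_reals all_analysis.
Set Implicit Arguments. Unset Strict Implicit. Unset Printing Implicit Defensive.
Import Order.TTheory GRing.Theory Num.Theory.
Import numFieldNormedType.Exports.
Local Open Scope classical_set_scope.
Local Open Scope ring_scope.

(* A query (q, v): q a row vector of length n, v the variance (valid iff v > 0). *)
Definition query (R : realType) (n : nat) := ('rV[R]_n * R)%type.

Definition dotq {R : realType} {n : nat} (q x : 'rV[R]_n) : R :=
  \sum_(j < n) q 0 j * x 0 j.

Definition zero_at {R : realType} {n : nat} (x : 'rV[R]_n) (i : 'I_n) : 'rV[R]_n :=
  \row_j (if j == i then 0 else x 0 j).

Definition lap_scale {R : realType} (v : R) : R := Num.sqrt (v / 2).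

Definition laplace_density {R : realType} (b t : R) : R :=
  (2 * b)^-1 * expR (- `|t| / b).

(* Pr[ L_Q(x) \in S ] = Pr[ q.x + rho \in S ], rho ~ Laplace(b), b = sqrt(v/2) *)
Definition laplace_prob {R : realType} {n : nat} (Q : query R n) (x : 'rV[R]_n)
  (S : set R) : \bar R :=
  let D := [set r : R | S (dotq Q.1 x + r)%R] in
  (\int[@lebesgue_measure R]_(r in D)
      (laplace_density (lap_scale Q.2) r)%:E)%E.

(* The supremum ranges over measurable S on which the two probabilities are
   positive (so that the log-ratio is defined). *)
Definition privacy_loss {R : realType} {n : nat} (X : set R) (Q : query R n)
  (i : 'I_n) : \bar R :=
  ereal_sup [set e : \bar R | exists (S : set R) (x : 'rV[R]_n),
    [/\ measurable S, (forall j, X (x 0 j)),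
        (0 < laplace_prob Q x S)%E, (0 < laplace_prob Q (zero_at x i) S)%E &
        e = (`| ln (fine (laplace_prob Q x S) / fine (laplace_prob Q (zero_at x i) S)) |)%:E]].

(* The determinacy relation, multisets represented as sequences up to permutation.
   Only valid queries (v > 0) are ever related. *)
Inductive determines {R : realType} {n : nat} : seq (query R n) -> query R n -> Prop :=
| det_sum (k : nat) (Qs : 'I_k -> query R n) :
    (0 < k)%N -> (forall j, 0 < (Qs j).2) ->
    determines [seq Qs j | j <- enum 'I_k]
               (\sum_(j < k) (Qs j).1, \sum_(j < k) (Qs j).2)
| det_scale (q : 'rV[R]_n) (v c : R) :
    0 < v -> c != 0 -> determines [:: (q, v)] (c *: q, c ^+ 2 * v)
| det_relax (q : 'rV[R]_n) (v v' : R) :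
    0 < v -> v <= v' -> determines [:: (q, v)] (q, v')
| det_trans (k : nat) (Ss : 'I_k -> seq (query R n)) (Qs : 'I_k -> query R n)
    (Q : query R n) :
    (forall j, determines (Ss j) (Qs j)) ->
    determines [seq Qs j | j <- enum 'I_k] Q ->
    determines (flatten [seq Ss j | j <- enum 'I_k]) Q
| det_perm (s s' : seq (query R n)) (Q : query R n) :
    perm_eq s s' -> determines s Q -> determines s' Q.

Definition arbitrage_free {R : realType} {n : nat} (mu : query R n -> \bar R) : Prop :=
  forall (s : seq (query R n)) (Q : query R n),
    (0 < size s)%N -> determines s Q -> (mu Q <= \sum_(Q' <- s) mu Q')%E.

Definition fair {R : realType} {n : nat} (i : 'I_n) (mu : query R n -> \bar R) : Prop :=
  forall (q : 'rV[R]_n) (v : R), 0 < v -> q 0 i = 0 -> mu (q, v) = 0%E.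

Definition compensating {R : realType} {n : nat} (X : set R) (i : 'I_n)
  (W : \bar R -> \bar R) (mu : query R n -> \bar R) : Prop :=
  forall (q : 'rV[R]_n) (v : R), 0 < v -> (W (privacy_loss X (q, v) i) <= mu (q, v))%E.

Definition gamma {R : realType} (X : set R) : R := sup [set `|x| | x in X].

Definition linear_contract {R : realType} (c : R) (e : \bar R) : \bar R := (c%:E * e)%E.

Definition lap_micro_payment {R : realType} {n : nat} (X : set R) (c : 'I_n -> R)
  (i : 'I_n) (Q : query R n) : \bar R :=
  (gamma X * c i / Num.sqrt (Q.2 / 2) * `|Q.1 0 i|)%:E.

(* Main.v *)
Require Import Defs.
From HB Require Import structures.
From mathcomp Require Import all_boot all_order all_algebra.
From mathcomp Require Import all_classical all_reals all_analysis.
From mathcomp Require Import measurable_realfun.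
From mathcomp Require Import ring lra.
Import Order.TTheory GRing.Theory Num.Theory.
Import numFieldNormedType.Exports.
Local Open Scope classical_set_scope.
Local Open Scope ring_scope.

Section shift.
Context {R : realType}.
Local Notation mu := (@lebesgue_measure R).

Lemma mshift (t : R) : measurable_fun [set: measurableTypeR R]
  ((fun x : R => x + t) : measurableTypeR R -> measurableTypeR R).
Proof. by apply: measurable_funD => //; exact: measurable_cst. Qed.

Lemma lebesgue_shift (t : R) (A : set R) : measurable A ->
  pushforward mu ((fun x : R => x + t) : _ -> measurableTypeR R) A = mu A.
Proof.
move=> mA; apply/esym/lebesgue_measure_unique => //=.
  exact: mshift.
move=> _ _ [[a b]] _ <-.
rewrite /pushforward.
have -> : (fun x : R => x + t) @^-1` `]a, b]%classic = `](a - t), (b - t)]%classic.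
  apply/seteqP; split => x /=; rewrite !in_itv /=.
    by rewrite ltrBlDr lerBrDr.
  by rewrite ltrBlDr lerBrDr.
rewrite !lebesgue_measure_itv /= !lte_fin ltrD2r.
by case: ifP => //= _; rewrite -EFinD; congr EFin; rewrite opprB addrA subrK.
Qed.

Lemma integral_shift (t : R) (D : set R) (f : R -> \bar R) :
  measurable D -> measurable_fun D f -> (forall x, D x -> (0 <= f x)%E) ->
  (\int[mu]_(x in D) f x = \int[mu]_(x in (fun x : R => x + t)%R @^-1` D) f (x + t)%R)%E.
Proof.
move=> mD mf f0.
transitivity (\int[pushforward mu ((fun x : R => x + t)%R : _ -> measurableTypeR R)]_(x in D) f x)%E; last first.
  by rewrite (ge0_integral_pushforward (mshift t) mu mD mf) // => y /set_mem; exact: f0.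
apply: eq_measure_integral; first exact: mshift.
move=> mph A mA _; exact/esym/lebesgue_shift.
Qed.

Lemma measurable_densR (b : R) :
  measurable_fun [set: R] (laplace_density b).
Proof.
apply: measurable_funM => //.
apply: measurableT_comp; first exact: measurable_expR.
apply: measurable_funM => //.
exact: measurableT_comp.
Qed.

Lemma measurable_dens (b : R) :
  measurable_fun [set: R] (fun r => (laplace_density b r)%:E).
Proof. exact: ((measurable_EFinP _ (laplace_density b)).2 (measurable_densR b)). Qed.

Lemma dens_ge0 (b r : R) : 0 <= b -> 0 <= laplace_density b r.
Proof. by move=> b0; rewrite /laplace_density mulr_ge0 ?expR_ge0 // invr_ge0 mulr_ge0. Qed.

Lemma dens_shift (b r t : R) : 0 < b ->
  laplace_density b r <= expR (`|t| / b) * laplace_density b (r + t).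
Proof.
move=> b0; rewrite /laplace_density mulrCA -expRD ler_wpM2l //.
  by rewrite invr_ge0 mulr_ge0 // ltW.
rewrite ler_expR -mulrDl; apply: ler_wpM2r; first by rewrite invr_ge0 ltW.
have := ler_normD r t; lra.
Qed.

Lemma lap_bound (b a a' : R) (S : set R) : 0 < b -> measurable S ->
 (\int[mu]_(r in [set r | S (a + r)%R]) (laplace_density b r)%:E <=
  (expR (`|a - a'| / b))%:E *
    \int[mu]_(r in [set r | S (a' + r)%R]) (laplace_density b r)%:E)%E.
Proof.
move=> b0 mS.
have mD c : measurable [set r | S (c + r)].
  have -> : [set r | S (c + r)] = (fun x => x + c) @^-1` S.
    by apply/funext => r /=; rewrite addrC.
  by have := mshift c measurableT _ mS; rewrite setTI.
have f0 : forall x, (0 <= (laplace_density b x)%:E)%E.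
  by move=> x; rewrite lee_fin dens_ge0 // ltW.
have mf : measurable_fun [set: R] (fun x => (laplace_density b x)%:E).
  exact: measurable_dens.
have mft : measurable_fun [set: R] (fun x => (laplace_density b (x + (a - a')))%:E).
  apply/measurable_EFinP; apply: measurableT_comp; last exact: mshift.
  exact: measurable_densR.
rewrite [X in (_ <= _ * X)%E](integral_shift (a - a') _ _ (mD a') (measurable_funTS mf)); last by move=> x _.
have -> : (fun x : R => x + (a - a')) @^-1` [set r | S (a' + r)%R] = [set r | S (a + r)%R].
  by apply/funext => r /=; congr S; ring.
rewrite -ge0_integralZl_EFin //; last 2 first.
- exact: mD.
- exact: measurable_funTS.
apply: ge0_le_integral => //.
- exact: mD.
- exact: measurable_funTS.
- by apply: measurable_funTS; apply: measurable_funeM.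
- by move=> x _; rewrite -EFinM lee_fin dens_shift.
Qed.

End shift.
Section lnb.
Context {R : realType}.

Lemma ln_ratio_bound (p p' : \bar R) (d : R) : 0 <= d -> (0 < p)%E -> (0 < p')%E ->
  (p <= (expR d)%:E * p')%E -> (p' <= (expR d)%:E * p)%E ->
  `|ln (fine p / fine p')| <= d.
Proof.
move=> d0; case: p => [r| |] //; case: p' => [r'| |] //=.
- rewrite !lte_fin -!EFinM !lee_fin => r0 r'0 h1 h2.
  rewrite ler_norml; apply/andP; split.
    rewrite -[X in X <= _](expRK (- d)) ler_ln ?posrE ?expR_gt0 ?divr_gt0 //.
    by rewrite expRN ler_pdivlMr // mulrC ler_pdivrMr ?expR_gt0 // mulrC.
  rewrite -[X in _ <= X](expRK d) ler_ln ?posrE ?expR_gt0 ?divr_gt0 //.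
  by rewrite ler_pdivrMr.
all: by move=> *; rewrite ?invr0 ?mulr0 ?mul0r ln0 // normr0.
Qed.
End lnb.
Section rest.
Context {R : realType}.

Lemma dotq_zero_at n (q x : 'rV[R]_n) i :
  dotq q x - dotq q (zero_at x i) = q 0 i * x 0 i.
Proof.
rewrite /dotq -sumrB (bigD1 i) //= big1 ?addr0.
  by rewrite /zero_at mxE eqxx mulr0 subr0.
by move=> j /negbTE ji; rewrite /zero_at mxE ji subrr.
Qed.

Lemma gamma_ub (X : set R) M x : (forall y, X y -> `|y| <= M) -> X x -> `|x| <= gamma X.
Proof.
move=> hM Xx; apply: sup_upper_bound; last by exists x.
split; first by exists `|x|, x.
by exists M => _ [y Xy <-]; exact: hM.
Qed.

Lemma gamma_ge0 (X : set R) M : (forall y, X y -> `|y| <= M) -> 0 <= gamma X.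
Proof.
move=> hM; have [[x Xx]|nX] := pselect (exists x, X x).
  exact: (@le_trans _ _ `|x| _ _ (normr_ge0 x) (@gamma_ub X M x hM Xx)).
rewrite /gamma (_ : [set `|x| | x in X] = set0) ?sup0 //.
by apply/seteqP; split => // z [x Xx _]; apply: nX; exists x.
Qed.

Lemma le_ratio (a v v' : R) : 0 <= a -> 0 < v -> v <= v' ->
  a / Num.sqrt (v' / 2) <= a / Num.sqrt (v / 2).
Proof.
move=> a0 v0 vv; apply: ler_wpM2l => //.
rewrite lef_pV2 ?posrE ?sqrtr_gt0 ?divr_gt0 //; last exact: lt_le_trans vv.
rewrite ler_sqrt; last by rewrite divr_ge0 // ltW // (lt_le_trans v0).
by apply: ler_wpM2r.
Qed.

Lemma h_arb n (i : 'I_n) (s : seq (query R n)) Q : determines s Q ->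
  `|Q.1 0 i| / Num.sqrt (Q.2 / 2) <=
    \sum_(Q' <- s) `|Q'.1 0 i| / Num.sqrt (Q'.2 / 2).
Proof.
elim => {s Q}.
- move=> k Qs k0 Qpos /=.
  rewrite big_map big_enum /=.
  rewrite summxE.
  have Vge j : (Qs j).2 <= \sum_(l < k) (Qs l).2.
    by rewrite (bigD1 j) //= lerDl sumr_ge0 // => l _; exact: ltW.
  apply: (@le_trans _ _ ((\sum_(j < k) `|(Qs j).1 0 i|) /
      Num.sqrt ((\sum_(j < k) (Qs j).2) / 2))).
    by apply: ler_wpM2r; [rewrite invr_ge0 sqrtr_ge0 | exact: ler_norm_sum].
  rewrite mulr_suml; apply: ler_sum => j _; exact: le_ratio.
- move=> q v c v0 c0 /=; rewrite big_seq1 /= mxE normrM.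
  rewrite -mulrA sqrtrM ?sqr_ge0 // sqrtr_sqr invfM mulrACA mulfV ?normr_eq0 //.
  by rewrite mul1r.
- by move=> q v v' v0 vv /=; rewrite big_seq1 le_ratio.
- move=> k Ss Qs Q _ IH1 _ IH2.
  apply: le_trans IH2 _; rewrite big_map big_flatten /= big_map.
  by apply: ler_sum => j _; exact: IH1.
- by move=> s s' Q pe _ IH; rewrite -(perm_big _ pe).
Qed.

End rest.

Theorem proposition9 (R : realType) (n : nat) (X : set R) (c : 'I_n -> R) :
  (exists M : R, forall x, X x -> `|x| <= M) ->
  (forall i, 0 < c i) ->
  forall i : 'I_n,
    [/\ fair i (lap_micro_payment X c i),
        arbitrage_free (lap_micro_payment X c i) &
        compensating X i (linear_contract (c i)) (lap_micro_payment X c i)].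
Proof.
move=> [M hM] c0 i; have g0 := @gamma_ge0 R X M hM.
have e (Q : query R n) : gamma X * c i / Num.sqrt (Q.2 / 2) * `|Q.1 0 i| =
    (gamma X * c i) * (`|Q.1 0 i| / Num.sqrt (Q.2 / 2)).
  by rewrite mulrAC -mulrA.
split.
- by move=> q v _ q0; rewrite /lap_micro_payment /= q0 normr0 mulr0.
- move=> s Q _ hd; rewrite /lap_micro_payment sumEFin lee_fin e.
  under eq_bigr do rewrite e.
  rewrite -mulr_sumr; apply: ler_wpM2l; first by rewrite mulr_ge0 // ltW.
  exact: h_arb.
- move=> q v v0.
  set b := Num.sqrt (v / 2).
  have b0 : 0 < b by rewrite sqrtr_gt0 divr_gt0.
  have H : (privacy_loss X (q, v) i <= (gamma X * `|q 0 i| / b)%:E)%E.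
    apply: ge_ereal_sup => _ [S [x [mS Xx p0 p0' ->]]].
    rewrite lee_fin.
    apply: le_trans (@ln_ratio_bound R _ _ (`|dotq q x - dotq q (zero_at x i)| / b) _ p0 p0' _ _) _.
    - by rewrite divr_ge0 // ltW.
    - exact: lap_bound.
    - by rewrite distrC; exact: lap_bound.
    apply: ler_wpM2r; first by rewrite invr_ge0 ltW.
    rewrite dotq_zero_at normrM mulrC ler_wpM2r //.
    exact: (@gamma_ub R X M _ hM (Xx i)).
  rewrite /linear_contract /lap_micro_payment /=.
  apply: le_trans (lee_wpmul2l _ H) _; first by rewrite lee_fin ltW.
  rewrite -EFinM lee_fin /b le_eqVlt; apply/orP; left; apply/eqP; ring.
Qed.
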